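(* Let $s>0$, $\gamma\ge0$, $u>0$, and $\nu_0,\nu_1\ge0$ with $\nu_0+\nu_1=1$. Let $(a_t)_{t\ge0}$ be the embedded ASG process, and let $y(\cdot;y_0)$ solve $$\dot y=-y(1-y)[s+\gamma(1-y)]+u\nu_1(1-y)-u\nu_0y,\qquad y(0)=y_0\in[0,1].$$ Then for all $\alpha\in\Xi^\star$, $t\ge0$ and $y_0\in[0,1]$, $$H\big(\alpha,y(t;y_0)\big)=\mathbb E_\alpha\big[H(a_t,y_0)\big].$$ In particular, if the process starts from the tree consisting only of an unmarked root, then $y(t;y_0)=\mathbb E\big[H(a_t,y_0)\big]$.
   Context: $\Xi^\star$ is the set of finite rooted trees with the following properties: every vertex has outdegree at most 3; the children of a vertex of outdegree 2 are labelled left and right, and those of a vertex of outdegree 3 are labelled left, middle and right; every vertex of outdegree 1 carries a mark, either $\times$ or $\circ$; no other vertex carries a mark. The embedded ASG process $(a_t)_{t\ge0}$ is the continuous-time Markov chain on $\Xi^\star$ in which, independently for each leaf $\ell$ of the current tree: - at rate $s$, two children (left, right) are attached to $\ell$; - at rate $\gamma$, three children (left, middle, right) are attached to $\ell$; - at rate $u\nu_1$, one child is attached to $\ell$ and $\ell$ is marked $\times$; - at rate $u\nu_0$, one child is attached to $\ell$ and $\ell$ is marked $\circ$. $\mathbb E_\alpha$ denotes expectation when $a_0=\alpha$. For $\alpha\in\Xi^\star$ and $z\in[0,1]$, $H(\alpha,z)$ is the probability that the root of $\alpha$ gets type 1 (''unfit''). Types are obtained as follows. Each leaf independently gets type 1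 with probability $z$ and type 0 otherwise. Types then propagate to the root: a vertex marked $\times$ (resp. $\circ$) has type 1 (resp. 0); a vertex of outdegree 2 has type 1 iff both children have type 1; a vertex of outdegree 3 has type 0 iff its left child has type 0 or both its middle and right children have type 0. *)

(* Defs.v *)
From Stdlib Require Import Reals List.
From Coquelicot Require Import Coquelicot.
Import ListNotations.
Open Scope R_scope.

(* The set Xi^* of finite rooted trees: every vertex has outdegree 0,1,2 or 3;
   children of outdegree-2/3 vertices are ordered (left, [middle,] right);
   outdegree-1 vertices carry a mark (true = ×, false = ∘); no other marks. *)
Inductive tree : Type :=
  | Leaf : tree
  | Mark : bool -> tree -> tree
  | Bin  : tree -> tree -> tree
  | Ter  : tree -> tree -> tree -> tree.

(* H(alpha, z): probability that the root gets type 1, when leaves get type 1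
   independently with probability z and types propagate to the root. *)
Fixpoint H (a : tree) (z : R) : R :=
  match a with
  | Leaf => z
  | Mark true _ => 1
  | Mark false _ => 0
  | Bin l r => H l z * H r z
  | Ter l m r => H l z * (1 - (1 - H m z) * (1 - H r z))
  end.

(* Transitions of the embedded ASG process out of a tree: list of (rate, new tree),
   one group of four entries per leaf. *)
Fixpoint succ (s g u nu0 nu1 : R) (a : tree) : list (R * tree) :=
  match a with
  | Leaf => [(s, Bin Leaf Leaf); (g, Ter Leaf Leaf Leaf);
             (u * nu1, Mark true Leaf); (u * nu0, Mark false Leaf)]
  | Mark b c => map (fun p => (fst p, Mark b (snd p))) (succ s g u nu0 nu1 c)
  | Bin l r => map (fun p => (fst p, Bin (snd p) r)) (succ s g u nu0 nu1 l)
            ++ map (fun p => (fst p, Bin l (snd p))) (succ s g u nu0 nu1 r)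
  | Ter l m r => map (fun p => (fst p, Ter (snd p) m r)) (succ s g u nu0 nu1 l)
            ++ map (fun p => (fst p, Ter l (snd p) r)) (succ s g u nu0 nu1 m)
            ++ map (fun p => (fst p, Ter l m (snd p))) (succ s g u nu0 nu1 r)
  end.

Definition rate_sum (l : list (R * tree)) (f : tree -> R) : R :=
  fold_right (fun p acc => fst p * f (snd p) + acc) 0 l.

Definition total_rate (s g u nu0 nu1 : R) (a : tree) : R :=
  rate_sum (succ s g u nu0 nu1 a) (fun _ => 1).

(* Backward integral-equation iteration (Norris, Markov Chains, Thm 2.8.3/2.8.4):
   Tn n t a = E_a[ f(a_t) ; at most n jumps in [0,t] ]  (for f >= 0). *)
Fixpoint Tn (s g u nu0 nu1 : R) (f : tree -> R) (n : nat) (t : R) (a : tree) : R :=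
  let lam := total_rate s g u nu0 nu1 a in
  match n with
  | O => exp (- lam * t) * f a
  | S n' => exp (- lam * t) * f a
      + RInt (fun r => exp (- lam * r) *
                rate_sum (succ s g u nu0 nu1 a) (fun b => Tn s g u nu0 nu1 f n' (t - r) b))
             0 t
  end.

(* E_a[ f(a_t) ] for the (minimal) continuous-time Markov chain with the above rates:
   the increasing limit of Tn as n -> oo. *)
Definition ASG_expect (s g u nu0 nu1 : R) (a : tree) (t : R) (f : tree -> R) : R :=
  real (Lim_seq (fun n => Tn s g u nu0 nu1 f n t a)).

Definition ode_rhs (s g u nu0 nu1 : R) (y : R) : R :=
  - y * (1 - y) * (s + g * (1 - y)) + u * nu1 * (1 - y) - u * nu0 * y.

(* Main.v *)
Require Import Defs.
From Stdlib Require Import Reals Lra Psatz List Classical FunctionalExtensionality.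
From Coquelicot Require Import Coquelicot.
Import ListNotations.
Open Scope R_scope.

Lemma rs_app l1 l2 f : rate_sum (l1 ++ l2) f = rate_sum l1 f + rate_sum l2 f.
Proof. induction l1 as [|p l IH]; simpl; [ring|]. unfold rate_sum in *; simpl. rewrite IH. ring. Qed.

Lemma rs_map (T : tree -> tree) l f :
  rate_sum (map (fun p => (fst p, T (snd p))) l) f = rate_sum l (fun b => f (T b)).
Proof. induction l as [|p l IH]; simpl; [reflexivity|]. unfold rate_sum in *; simpl. rewrite IH. reflexivity. Qed.

Ltac rsm := repeat progress (rewrite ?rs_app, ?(rs_map (fun b => Mark _ b)), ?(rs_map (fun b => Bin b _)), ?(rs_map (fun b => Bin _ b)),
  ?(rs_map (fun b => Ter b _ _)), ?(rs_map (fun b => Ter _ b _)), ?(rs_map (fun b => Ter _ _ b))); cbv beta.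

Lemma rs_affine l (al be : R) f :
  rate_sum l (fun b => al + be * f b) = al * rate_sum l (fun _ => 1) + be * rate_sum l f.
Proof. induction l as [|p l IH]; unfold rate_sum in *; simpl; [ring|]. rewrite IH. ring. Qed.

Lemma rs_ext l f1 f2 : (forall b, f1 b = f2 b) -> rate_sum l f1 = rate_sum l f2.
Proof. intro E. induction l as [|p l IH]; unfold rate_sum in *; simpl; [ring|]. rewrite IH, E. ring. Qed.

Lemma rs_scal l c f : rate_sum l (fun b => c * f b) = c * rate_sum l f.
Proof. rewrite (rs_ext l _ (fun b => 0 + c * f b)) by (intros; ring). rewrite rs_affine. ring. Qed.

Lemma rs_plus l f1 f2 : rate_sum l (fun b => f1 b + f2 b) = rate_sum l f1 + rate_sum l f2.
Proof. induction l as [|p l IH]; unfold rate_sum in *; simpl; [ring|]. rewrite IH. ring. Qed.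

Lemma rs_minus l f1 f2 : rate_sum l (fun b => f1 b - f2 b) = rate_sum l f1 - rate_sum l f2.
Proof. induction l as [|p l IH]; unfold rate_sum in *; simpl; [ring|]. rewrite IH. ring. Qed.

Lemma rs_le l f1 f2 : List.Forall (fun p => 0 <= fst p /\ f1 (snd p) <= f2 (snd p)) l ->
  rate_sum l f1 <= rate_sum l f2.
Proof. intro F. induction l as [|p l IH]; unfold rate_sum in *; simpl; [lra|].
  inversion F as [|? ? [Q1 Q2] Q3]; subst. specialize (IH Q3). nra. Qed.

Fixpoint nl (a : tree) : R :=
  match a with
  | Leaf => 1
  | Mark _ c => nl c
  | Bin l r => nl l + nl r
  | Ter l m r => nl l + nl m + nl r
  end.

Lemma nl_ge1 a : 1 <= nl a.
Proof. induction a; simpl; lra. Qed.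

Lemma total_rate_nl s g u nu0 nu1 a :
  rate_sum (succ s g u nu0 nu1 a) (fun _ => 1) = (s + g + u * nu1 + u * nu0) * nl a.
Proof.
  induction a; simpl.
  - unfold rate_sum; simpl; ring.
  - rsm. rewrite IHa. ring.
  - rsm. rewrite IHa1, IHa2. ring.
  - rsm. rewrite IHa1, IHa2, IHa3. ring.
Qed.

Lemma succ_prop s g u nu0 nu1 a : 0 <= s -> 0 <= g -> 0 <= u -> 0 <= nu0 -> 0 <= nu1 ->
  List.Forall (fun p => 0 <= fst p /\ nl (snd p) <= nl a + 2) (succ s g u nu0 nu1 a).
Proof.
  intros Hs Hg Hu H0 H1.
  induction a; simpl.
  - repeat apply List.Forall_cons; try apply List.Forall_nil; simpl; split; nra.
  - rewrite List.Forall_map. eapply List.Forall_impl; [|exact IHa]. simpl. tauto.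
  - rewrite List.Forall_app, !List.Forall_map. split; (eapply List.Forall_impl; [|eassumption]); simpl; intros p [? ?]; split; lra.
  - rewrite !List.Forall_app, !List.Forall_map. repeat split; (eapply List.Forall_impl; [|eassumption]); simpl; intros p [? ?]; split; lra.
Qed.

Lemma succ_nonneg s g u nu0 nu1 a : 0 <= s -> 0 <= g -> 0 <= u -> 0 <= nu0 -> 0 <= nu1 ->
  List.Forall (fun p => 0 <= fst p) (succ s g u nu0 nu1 a).
Proof. intros. eapply List.Forall_impl; [|apply succ_prop; auto]. simpl; tauto. Qed.

Definition Lgen s g u nu0 nu1 a z :=
  rate_sum (succ s g u nu0 nu1 a) (fun b => H b z) - rate_sum (succ s g u nu0 nu1 a) (fun _ => 1) * H a z.

Lemma H_01 a z : 0 <= z <= 1 -> 0 <= H a z <= 1.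
Proof. intro Hz. induction a; simpl; try destruct b; try lra.
  - split; nra.
  - assert (0 <= (1 - H a2 z) * (1 - H a3 z) <= 1) by (split; nra). split; nra. Qed.

Lemma is_derive_eq (f : R -> R) (x d1 d2 : R) : is_derive f x d1 -> @eq R d1 d2 -> is_derive f x d2.
Proof. intros; subst; auto. Qed.
Lemma dR_mult (f g : R -> R) x df dg : is_derive f x df -> is_derive g x dg ->
  is_derive (fun x => f x * g x) x (df * g x + f x * dg).
Proof. intros A B. exact (is_derive_mult f g x df dg A B ltac:(intros; apply Rmult_comm)). Qed.
Lemma dR_cminus (f : R -> R) c x df : is_derive f x df -> is_derive (fun x => c - f x) x (- df).
Proof. intros A. eapply is_derive_eq. apply (is_derive_minus (fun _ => c) f x zero df); [apply is_derive_const|exact A].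
  unfold minus, plus, opp, zero; simpl. ring. Qed.

Lemma H_deriv s g u nu0 nu1 (z : R -> R) x a :
  is_derive z x (ode_rhs s g u nu0 nu1 (z x)) ->
  is_derive (fun x => H a (z x)) x (Lgen s g u nu0 nu1 a (z x)).
Proof.
  intro Dz. induction a; simpl.
  - eapply is_derive_eq; [exact Dz|]. unfold Lgen, rate_sum, ode_rhs; simpl. ring.
  - eapply is_derive_eq.
    + apply (is_derive_ext (fun _ => H (Mark b a) (z x))). { intro. destruct b; reflexivity. }
      apply is_derive_const.
    + unfold Lgen. simpl succ. rsm.
      rewrite (rs_ext _ (fun b0 => H (Mark b b0) (z x)) (fun _ => H (Mark b a) (z x) * 1)).
      2: { intro; destruct b; simpl; ring. }
      rewrite (rs_scal _ _ (fun _ => 1)). unfold zero; simpl. ring.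
  - eapply is_derive_eq; [exact (dR_mult _ _ _ _ _ IHa1 IHa2)|].
    unfold Lgen; simpl succ. rsm. simpl H.
    rewrite (rs_ext _ (fun b => H b (z x) * H a2 (z x)) (fun b => H a2 (z x) * H b (z x))) by (intro; ring). rewrite (rs_scal _ (H a2 (z x)) (fun b => H b (z x))).
    rewrite (rs_scal _ (H a1 (z x)) (fun b => H b (z x))). ring.
  - set (z0 := z x).
    pose proof (dR_mult _ _ _ _ _ (dR_cminus _ 1 _ _ IHa2) (dR_cminus _ 1 _ _ IHa3)) as D2.
    pose proof (dR_mult _ _ _ _ _ IHa1 (dR_cminus _ 1 _ _ D2)) as D.
    eapply is_derive_eq; [exact D|].
    unfold Lgen; simpl succ. fold z0. rsm. simpl H.
    rewrite (rs_ext _ (fun b => H b z0 * (1 - (1 - H a2 z0) * (1 - H a3 z0)))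
                      (fun b => 0 + (1 - (1 - H a2 z0) * (1 - H a3 z0)) * H b z0)) by (intro; ring).
    rewrite (rs_ext _ (fun b => H a1 z0 * (1 - (1 - H b z0) * (1 - H a3 z0)))
                      (fun b => H a1 z0 * H a3 z0 + (H a1 z0 * (1 - H a3 z0)) * H b z0)) by (intro; ring).
    rewrite (rs_ext _ (fun b => H a1 z0 * (1 - (1 - H a2 z0) * (1 - H b z0)))
                      (fun b => H a1 z0 * H a2 z0 + (H a1 z0 * (1 - H a2 z0)) * H b z0)) by (intro; ring).
    rewrite !(rs_affine _ _ _ (fun b => H b z0)). ring.
Qed.


Definition Psi (sc : tree -> list (R * tree)) (U : R -> tree -> R) (t : R) (a : tree) : R :=
  RInt (fun r => exp (- rate_sum (sc a) (fun _ => 1) * r) * rate_sum (sc a) (fun b => U (t - r) b)) 0 t.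

Definition Ucont (U : R -> tree -> R) := forall b x, continuous (fun x => U x b) x.

Lemma cR_der (f : R -> R) x : ex_derive f x -> continuous f x.
Proof. intro D. exact (@ex_derive_continuous R_AbsRing R_NormedModule f x D). Qed.

Lemma exR_cont (f : R -> R) a b : (forall z, Rmin a b <= z <= Rmax a b -> continuous f z) -> ex_RInt f a b.
Proof. intro C. exact (@ex_RInt_continuous R_CompleteNormedModule f a b C). Qed.

Lemma cR_plus (f g : R -> R) x : continuous f x -> continuous g x -> continuous (fun x => f x + g x) x.
Proof. intros A B. exact (continuous_plus f g x A B). Qed.
Lemma cR_mult (f g : R -> R) x : continuous f x -> continuous g x -> continuous (fun x => f x * g x) x.
Proof. intros A B. exact (continuous_mult f g x A B). Qed.
Lemma cR_const (c x : R) : continuous (fun _ => c) x.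
Proof. apply continuous_const. Qed.
Lemma cR_exp (k x : R) : continuous (fun x => exp (k * x)) x.
Proof. apply cR_der. auto_derive. auto. Qed.
Lemma cR_tminus (f : R -> R) t x : (forall z, continuous f z) -> continuous (fun r => f (t - r)) x.
Proof. intro C. apply (continuous_comp (fun r => t - r) f). 2: apply C.
  apply cR_der. auto_derive. auto. Qed.

Lemma rs_cont l (U : R -> tree -> R) x0 : (forall b, continuous (fun x => U x b) x0) ->
  continuous (fun x => rate_sum l (fun b => U x b)) x0.
Proof.
  intro C. induction l as [|p l IH]; unfold rate_sum in *; simpl.
  - apply cR_const.
  - apply cR_plus; [apply cR_mult; [apply cR_const|apply C]|exact IH].
Qed.

Lemma Ucont_rs l U x : Ucont U -> continuous (fun x => rate_sum l (fun b => U x b)) x.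
Proof. intros C. apply rs_cont. intro; apply C. Qed.

Lemma integrand_cont (sc : tree -> list (R * tree)) U a t r : Ucont U ->
  continuous (fun r => exp (- rate_sum (sc a) (fun _ => 1) * r) * rate_sum (sc a) (fun b => U (t - r) b)) r.
Proof.
  intro C. apply cR_mult; [apply cR_exp|].
  apply (cR_tminus (fun x => rate_sum (sc a) (fun b => U x b))). intro; apply Ucont_rs; auto.
Qed.

Lemma integrand_ex (sc : tree -> list (R * tree)) U a t a0 b0 : Ucont U ->
  ex_RInt (fun r => exp (- rate_sum (sc a) (fun _ => 1) * r) * rate_sum (sc a) (fun b => U (t - r) b)) a0 b0.
Proof. intro C. apply exR_cont. intros; apply integrand_cont; auto. Qed.

Lemma g_cont (sc : tree -> list (R * tree)) U a x : Ucont U ->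
  continuous (fun x => exp (rate_sum (sc a) (fun _ => 1) * x) * rate_sum (sc a) (fun b => U x b)) x.
Proof. intro C. apply cR_mult; [apply cR_exp|apply Ucont_rs; auto]. Qed.

Lemma scalR (x y : R) : scal x y = x * y.
Proof. reflexivity. Qed.
Lemma oppR (x : R) : opp x = - x.
Proof. reflexivity. Qed.
Lemma plusR (x y : R) : plus x y = x + y.
Proof. reflexivity. Qed.
Lemma minusR (x y : R) : minus x y = x - y.
Proof. reflexivity. Qed.
Lemma zeroR : (zero : R) = 0.
Proof. reflexivity. Qed.

Ltac toR := match goal with |- ?A = ?B => change (@eq R A B) end.

Lemma Psi_alt sc U t a : Ucont U ->
  Psi sc U t a = exp (- rate_sum (sc a) (fun _ => 1) * t) *
     RInt (fun x => exp (rate_sum (sc a) (fun _ => 1) * x) * rate_sum (sc a) (fun b => U x b)) 0 t.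
Proof.
  intro C. set (lam := rate_sum (sc a) (fun _ => 1)).
  set (g := fun x => exp (lam * x) * rate_sum (sc a) (fun b => U x b)).
  assert (Ex : forall a0 b0, ex_RInt g a0 b0).
  { intros. apply exR_cont. intros. apply g_cont; auto. }
  pose proof (RInt_correct _ _ _ (Ex 0 t)) as I.
  apply is_RInt_swap in I.
  assert (I' : is_RInt g (-1 * 0 + t) (-1 * t + t) (opp (RInt g 0 t))).
  { replace (-1 * 0 + t) with t by ring. replace (-1 * t + t) with 0 by ring. exact I. }
  pose proof (@is_RInt_comp_lin R_NormedModule g (-1) t 0 t _ I') as I2.
  apply (@is_RInt_scal R_NormedModule _ _ _ (- exp (- lam * t))) in I2.
  assert (I3 : is_RInt (fun r => exp (- lam * r) * rate_sum (sc a) (fun b => U (t - r) b)) 0 t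
                (scal (- exp (- lam * t)) (opp (RInt g 0 t)))).
  { eapply is_RInt_ext; [|exact I2]. intros r _. toR.
    change (scal ?a ?b) with (a * b). change (scal ?a ?b) with (a * b). unfold g.
    replace (-1 * r + t) with (t - r) by ring.
    replace (exp (lam * (t - r))) with (exp (lam * t) * exp (- lam * r)).
    2: { rewrite <- exp_plus. f_equal. ring. }
    replace (exp (- lam * t)) with (/ exp (lam * t)).
    2: { rewrite <- exp_Ropp. f_equal. ring. }
    field. apply Rgt_not_eq, exp_pos. }
  unfold Psi. fold lam. rewrite (@is_RInt_unique R_CompleteNormedModule _ _ _ _ I3).
  toR. unfold scal, opp; simpl. unfold mult; simpl. unfold g. ring.
Qed.

Lemma Psi_cont (sc : tree -> list (R * tree)) U a t0 : Ucont U -> continuous (fun t => Psi sc U t a) t0.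
Proof.
  intro C. set (lam := rate_sum (sc a) (fun _ => 1)).
  set (g := fun x => exp (lam * x) * rate_sum (sc a) (fun b => U x b)).
  apply (continuous_ext_loc (fun t => Psi sc U t a) (fun t => exp (- lam * t) * RInt g 0 t)).
  { apply filter_forall. intro t. rewrite Psi_alt; auto. }
  apply cR_mult; [apply cR_exp|].
  apply (@continuous_RInt_1 R_NormedModule g 0 t0 (fun z => RInt g 0 z)).
  apply filter_forall. intro z. apply (@RInt_correct R_CompleteNormedModule).
  apply exR_cont. intros. apply g_cont; auto.
Qed.

Lemma Psi_plus (sc : tree -> list (R * tree)) U V t a : Ucont U -> Ucont V ->
  Psi sc (fun x b => U x b + V x b) t a = Psi sc U t a + Psi sc V t a.
Proof.
  intros CU CV. unfold Psi.
  set (lam := rate_sum (sc a) (fun _ => 1)).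
  rewrite <- (@RInt_plus R_CompleteNormedModule); try (apply integrand_ex; auto).
  apply RInt_ext. intros r _. toR. rewrite rs_plus. unfold plus; simpl. rewrite Rmult_plus_distr_l. reflexivity.
Qed.

Lemma Psi_minus (sc : tree -> list (R * tree)) U V t a : Ucont U -> Ucont V ->
  Psi sc (fun x b => U x b - V x b) t a = Psi sc U t a - Psi sc V t a.
Proof.
  intros CU CV. unfold Psi.
  set (lam := rate_sum (sc a) (fun _ => 1)).
  rewrite <- (@RInt_minus R_CompleteNormedModule); try (apply integrand_ex; auto).
  apply RInt_ext. intros r _. toR. rewrite rs_minus. unfold minus, plus, opp; simpl. unfold Rminus. rewrite Rmult_plus_distr_l, Ropp_mult_distr_r. reflexivity.
Qed.

Lemma Psi_ext (sc : tree -> list (R * tree)) U V t a : 0 <= t ->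
  (forall x, 0 <= x <= t -> forall b, U x b = V x b) -> Psi sc U t a = Psi sc V t a.
Proof.
  intros Ht E. unfold Psi. apply RInt_ext. intros r Hr. toR.
  rewrite Rmin_left in Hr by lra. rewrite Rmax_right in Hr by lra.
  f_equal. apply rs_ext. intro b. apply E. lra.
Qed.

Lemma Psi_le_gen (sc : tree -> list (R * tree)) U (w : R -> R) t a : 0 <= t -> Ucont U ->
  ex_RInt w 0 t ->
  (forall r, 0 < r < t -> exp (- rate_sum (sc a) (fun _ => 1) * r) * rate_sum (sc a) (fun b => U (t - r) b) <= w r) ->
  Psi sc U t a <= RInt w 0 t.
Proof.
  intros Ht C Ew B. unfold Psi. apply RInt_le; auto. apply integrand_ex; auto.
Qed.

Lemma Psi_le (sc : tree -> list (R * tree)) U V t a : 0 <= t -> Ucont U -> Ucont V ->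
  List.Forall (fun p => 0 <= fst p) (sc a) ->
  (forall x, 0 <= x <= t -> forall b, U x b <= V x b) -> Psi sc U t a <= Psi sc V t a.
Proof.
  intros Ht CU CV Pos B. apply Psi_le_gen; auto. apply integrand_ex; auto.
  intros r Hr. apply Rmult_le_compat_l. apply Rlt_le, exp_pos.
  apply rs_le. eapply List.Forall_impl; [|exact Pos]. simpl. intros p Hp. split; auto. apply B. lra.
Qed.

Lemma Psi_zero (sc : tree -> list (R * tree)) t a : Psi sc (fun _ _ => 0) t a = 0.
Proof.
  unfold Psi. rewrite (RInt_ext _ (fun _ => 0)).
  - rewrite RInt_const. toR. unfold scal; simpl. unfold mult; simpl. ring.
  - intros. toR. cbv beta. rewrite (rs_ext _ (fun _ => 0) (fun b => 0 * (fun _ => 1) b)) by (intro; cbv beta; toR; ring). rewrite rs_scal. ring.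
Qed.

Lemma Psi_nonneg (sc : tree -> list (R * tree)) U t a : 0 <= t -> Ucont U ->
  List.Forall (fun p => 0 <= fst p) (sc a) ->
  (forall x, 0 <= x <= t -> forall b, 0 <= U x b) -> 0 <= Psi sc U t a.
Proof.
  intros. rewrite <- (Psi_zero sc t a). apply Psi_le; auto. intros b x; apply cR_const.
Qed.

Lemma Psi_0 (sc : tree -> list (R * tree)) U a : Psi sc U 0 a = 0.
Proof. unfold Psi. rewrite RInt_point. reflexivity. Qed.


Lemma cont_ed (f : R -> R) x : continuity_pt f x ->
  forall eps, 0 < eps -> exists del, 0 < del /\ forall y, Rabs (y - x) < del -> Rabs (f y - f x) < eps.
Proof.
  intros C eps He. destruct (C eps He) as [al [Hal Hy]]. exists al. split; auto.
  intros y Hyx. destruct (Req_dec y x) as [->|Hne].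
  - rewrite Rminus_diag, Rabs_R0. auto.
  - apply Hy. split; [split; [exact I|auto]|]. exact Hyx.
Qed.

Lemma barrier (d dd : R -> R) (T : R) :
  d 0 < 0 ->
  (forall eps, 0 < eps -> exists del, 0 < del /\ forall x, 0 < x < del -> d x < d 0 + eps) ->
  (forall x, 0 < x <= T -> derivable_pt_lim d x (dd x)) ->
  (forall x, 0 < x <= T -> d x = 0 -> dd x < 0) ->
  forall x, 0 <= x <= T -> d x < 0.
Proof.
  intros D0 RC Dd Neg x1 Hx1.
  destruct (Rlt_or_le (d x1) 0) as [|Hd1]; auto. exfalso.
  assert (Hx1p : 0 < x1).
  { destruct (Req_dec x1 0) as [E|E]; [subst; lra|lra]. }
  set (E := fun z => 0 <= z <= x1 /\ forall w, 0 <= w <= z -> d w < 0).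
  assert (E0 : E 0). { split; [lra|]. intros w Hw. replace w with 0 by lra. auto. }
  assert (Eb : bound E). { exists x1. intros z [Hz _]. lra. }
  destruct (completeness E Eb (ex_intro _ 0 E0)) as [m [Hub Hlub]].
  assert (Hm0 : 0 <= m) by (apply Hub; auto).
  assert (Hm1 : m <= x1). { apply Hlub. intros z [Hz _]. lra. }
  assert (A : forall w, 0 <= w < m -> d w < 0).
  { intros w Hw. destruct (classic (exists z, E z /\ w < z)) as [[z [[Hz1 Hz2] Hwz]]|Hn].
    - apply Hz2. lra.
    - assert (m <= w); [|lra]. apply Hlub. intros z Ez.
      destruct (Rle_or_lt z w); auto. exfalso; apply Hn; eauto. }
  assert (Hmp : 0 < m).
  { destruct (RC (- d 0)) as [del [Hdel Hd]]; [lra|].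
    set (z := Rmin (del / 2) x1).
    assert (Hz : 0 < z) by (unfold z; apply Rmin_pos; lra).
    assert (E z).
    { split; [split; [lra|unfold z; apply Rmin_r]|].
      intros w Hw. destruct (Req_dec w 0) as [->|Hw0]; auto.
      assert (w <= del / 2) by (pose proof (Rmin_l (del/2) x1); fold z in H; lra).
      specialize (Hd w ltac:(lra)). lra. }
    assert (z <= m) by (apply Hub; auto). lra. }
  assert (Cm : continuity_pt d m).
  { apply derivable_continuous_pt. exists (dd m). apply Dd. lra. }
  pose proof (cont_ed d m Cm) as Cm'.
  assert (Dm1 : 0 <= d m).
  { destruct (Rle_or_lt 0 (d m)) as [|Hlt]; auto. exfalso.
    assert (Hmx : m < x1). { destruct (Req_dec m x1) as [->|]; lra. }
    destruct (Cm' (- d m)) as [del [Hdel Hd]]; [lra|].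
    set (z := Rmin (m + del / 2) x1).
    assert (E z).
    { split; [unfold z; split; [apply Rmin_glb; lra|apply Rmin_r]|].
      intros w Hw. destruct (Rlt_or_le w m) as [Hwm|Hwm]; [apply A; lra|].
      assert (w <= m + del / 2) by (pose proof (Rmin_l (m + del/2) x1); fold z in H; lra).
      assert (Rabs (w - m) < del) by (rewrite Rabs_right; lra).
      specialize (Hd w H0). apply Rabs_def2 in Hd. lra. }
    assert (z <= m) by (apply Hub; auto).
    assert (m < z) by (unfold z; apply Rmin_glb_lt; lra). lra. }
  assert (Dm2 : d m <= 0).
  { destruct (Rle_or_lt (d m) 0) as [|Hlt]; auto. exfalso.
    destruct (Cm' (d m)) as [del [Hdel Hd]]; [lra|].
    set (w := m - Rmin (del / 2) (m / 2)).
    assert (Hr : 0 < Rmin (del/2) (m/2)) by (apply Rmin_pos; lra).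
    pose proof (Rmin_l (del/2) (m/2)). pose proof (Rmin_r (del/2) (m/2)).
    assert (Rabs (w - m) < del) by (unfold w; rewrite Rabs_left; lra).
    specialize (Hd w H1). apply Rabs_def2 in Hd.
    assert (d w < 0) by (apply A; unfold w; lra). lra. }
  assert (Dm : d m = 0) by lra.
  assert (Ndd : dd m < 0) by (apply Neg; [lra|auto]).
  destruct (Dd m ltac:(lra) (- dd m) ltac:(lra)) as [del Hd].
  set (h := - Rmin (del / 2) (m / 2)).
  assert (Hr : 0 < Rmin (del/2) (m/2)) by (apply Rmin_pos; pose proof (cond_pos del); lra).
  pose proof (Rmin_l (del/2) (m/2)). pose proof (Rmin_r (del/2) (m/2)). pose proof (cond_pos del).
  assert (Hh0 : h <> 0) by (unfold h; lra).
  assert (Hhd : Rabs h < del) by (unfold h; rewrite Rabs_left; lra).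
  specialize (Hd h Hh0 Hhd). rewrite Dm in Hd. apply Rabs_def2 in Hd.
  assert (Hneg : d (m + h) < 0) by (apply A; unfold h; lra).
  assert (0 < (d (m + h) - 0) / h).
  { unfold Rdiv. replace (d (m + h) - 0) with (d (m+h)) by ring.
    apply Rmult_lt_reg_r with (- h). unfold h; lra.
    rewrite Rmult_0_l. replace (d (m + h) * / h * - h) with (- d (m+h)) by (field; auto). lra. }
  lra.
Qed.

Lemma exp_le x y : x <= y -> exp x <= exp y.
Proof. intro H. destruct (Req_dec x y) as [->|Hn]; [lra|]. apply Rlt_le, exp_increasing. lra. Qed.

Lemma rc_of_filterlim (y : R -> R) y0 : filterlim y (at_right 0) (locally y0) ->
  forall eps, 0 < eps -> exists del, 0 < del /\ forall x, 0 < x < del -> Rabs (y x - y0) < eps.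
Proof.
  intros F eps He.
  assert (L : locally y0 (fun z => Rabs (z - y0) < eps)).
  { exists (mkposreal eps He). intros z Hz. exact Hz. }
  specialize (F _ L). destruct F as [del Hdel].
  exists del. split; [apply cond_pos|]. intros x Hx. apply Hdel; [|lra].
  change (Rabs (x - 0) < del). rewrite Rminus_0_r, Rabs_right; lra.
Qed.

Lemma ode_up s g u nu0 nu1 v : 0 < s -> 0 <= g -> 0 < u -> 0 <= nu0 -> 0 <= nu1 ->
  0 < v -> v <= 1 -> ode_rhs s g u nu0 nu1 (1 + v) - (2 * s + 1) * v < 0.
Proof.
  intros. replace (ode_rhs s g u nu0 nu1 (1 + v) - (2 * s + 1) * v) with
    (s * v * (v - 1) - v - g * (v * v) * (1 + v) - u * v * (nu0 + nu1) - u * nu0)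
    by (unfold ode_rhs; ring).
  assert (0 <= s * v * (1 - v)) by (apply Rmult_le_pos; nra).
  assert (0 <= g * (v * v) * (1 + v)) by (apply Rmult_le_pos; nra).
  assert (0 <= u * v * (nu0 + nu1)) by (apply Rmult_le_pos; nra).
  assert (0 <= u * nu0) by nra. nra.
Qed.

Lemma ode_low s g u nu0 nu1 v : 0 < s -> 0 <= g -> 0 < u -> 0 <= nu0 -> 0 <= nu1 ->
  0 < v -> 0 <= ode_rhs s g u nu0 nu1 (- v).
Proof.
  intros. replace (ode_rhs s g u nu0 nu1 (- v)) with
    (v * (1 + v) * (s + g * (1 + v)) + u * nu1 * (1 + v) + u * nu0 * v) by (unfold ode_rhs; ring).
  assert (0 <= v * (1 + v) * (s + g * (1 + v))) by (apply Rmult_le_pos; nra).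
  assert (0 <= u * nu1 * (1 + v)) by (apply Rmult_le_pos; nra).
  assert (0 <= u * nu0 * v) by (apply Rmult_le_pos; nra). lra.
Qed.

Lemma y_bounds s g u nu0 nu1 y0 (y : R -> R) :
  0 < s -> 0 <= g -> 0 < u -> 0 <= nu0 -> 0 <= nu1 ->
  0 <= y0 <= 1 -> y 0 = y0 ->
  filterlim y (at_right 0) (locally y0) ->
  (forall t, 0 < t -> is_derive y t (ode_rhs s g u nu0 nu1 (y t))) ->
  forall t, 0 <= t -> 0 <= y t <= 1.
Proof.
  intros Hs Hg Hu H0 H1 Hy0 Y0 F D t1 Ht1.
  pose proof (rc_of_filterlim y y0 F) as RC.
  set (K := 2 * s + 1).
  assert (HK : 0 < K) by (unfold K; lra).
  assert (Ekx : forall x, 0 <= x -> 1 <= exp (K * x)).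
  { intros x Hx. rewrite <- exp_0. apply exp_le. nra. }
  split.
  - destruct (Rle_or_lt 0 (y t1)) as [|Hlt]; auto. exfalso.
    set (eps := - y t1 * exp (- K * t1) / 2).
    assert (Heps : 0 < eps) by (unfold eps; pose proof (exp_pos (- K * t1)); nra).
    set (d := fun x => - (eps * exp (K * x)) - y x).
    set (dd := fun x => - (eps * (K * exp (K * x))) - ode_rhs s g u nu0 nu1 (y x)).
    assert (B : forall x, 0 <= x <= t1 -> d x < 0).
    { apply (barrier d dd t1).
      - unfold d. rewrite Rmult_0_r, exp_0, Y0. lra.
      - intros e He. destruct (RC e He) as [del [Hdel Hd]]. exists del. split; auto.
        intros x Hx. specialize (Hd x Hx). apply Rabs_def2 in Hd. unfold d.
        rewrite Rmult_0_r, exp_0, Y0. specialize (Ekx x ltac:(lra)). nra.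
      - intros x Hx. apply is_derive_Reals. unfold d, dd.
        apply (is_derive_eq _ _ (minus (- (eps * (K * exp (K * x)))) (ode_rhs s g u nu0 nu1 (y x)))).
        2: reflexivity.
        apply (is_derive_minus (fun x => - (eps * exp (K * x))) y).
        + auto_derive; auto. ring.
        + apply D. lra.
      - intros x Hx Hdx. unfold d in Hdx. unfold dd.
        set (v := eps * exp (K * x)).
        assert (0 < v) by (unfold v; pose proof (exp_pos (K * x)); nra).
        replace (y x) with (- v) by (unfold v; lra).
        pose proof (ode_low s g u nu0 nu1 v Hs Hg Hu H0 H1 H).
        assert (0 < eps * (K * exp (K * x))) by (pose proof (exp_pos (K * x)); apply Rmult_lt_0_compat; nra).
        lra. }
    assert (EK : exp (- K * t1) * exp (K * t1) = 1).
    { rewrite <- exp_plus. replace (- K * t1 + K * t1) with 0 by ring. apply exp_0. }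
    assert (EE : eps * exp (K * t1) = - y t1 / 2).
    { transitivity (- y t1 / 2 * (exp (- K * t1) * exp (K * t1))); [unfold eps; field|rewrite EK; ring]. }
    specialize (B t1 ltac:(lra)). unfold d in B. lra.
  - destruct (Rle_or_lt (y t1) 1) as [|Hlt]; auto. exfalso.
    set (w1 := y t1 - 1).
    set (eps := Rmin 1 w1 * exp (- K * t1) / 2).
    assert (Hmin : 0 < Rmin 1 w1) by (apply Rmin_pos; unfold w1; lra).
    pose proof (Rmin_l 1 w1). pose proof (Rmin_r 1 w1).
    assert (Heps : 0 < eps) by (unfold eps; pose proof (exp_pos (- K * t1)); nra).
    assert (EK : eps * exp (K * t1) = Rmin 1 w1 / 2).
    { assert (EK : exp (- K * t1) * exp (K * t1) = 1).
      { rewrite <- exp_plus. replace (- K * t1 + K * t1) with 0 by ring. apply exp_0. }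
      transitivity (Rmin 1 w1 / 2 * (exp (- K * t1) * exp (K * t1))); [unfold eps; field|rewrite EK; ring]. }
    set (d := fun x => y x - (1 + eps * exp (K * x))).
    set (dd := fun x => ode_rhs s g u nu0 nu1 (y x) - eps * (K * exp (K * x))).
    assert (B : forall x, 0 <= x <= t1 -> d x < 0).
    { apply (barrier d dd t1).
      - unfold d. rewrite Rmult_0_r, exp_0, Y0. lra.
      - intros e He. destruct (RC e He) as [del [Hdel Hd]]. exists del. split; auto.
        intros x Hx. specialize (Hd x Hx). apply Rabs_def2 in Hd. unfold d.
        rewrite Rmult_0_r, exp_0, Y0. specialize (Ekx x ltac:(lra)). nra.
      - intros x Hx. apply is_derive_Reals. unfold d, dd.
        apply (is_derive_eq _ _ (minus (ode_rhs s g u nu0 nu1 (y x)) (eps * (K * exp (K * x))))).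
        2: reflexivity.
        apply (is_derive_minus y (fun x => 1 + eps * exp (K * x))).
        + apply D. lra.
        + auto_derive; auto. ring.
      - intros x Hx Hdx. unfold d in Hdx. unfold dd.
        set (v := eps * exp (K * x)).
        assert (0 < v) by (unfold v; pose proof (exp_pos (K * x)); nra).
        assert (v <= 1).
        { unfold v. assert (exp (K * x) <= exp (K * t1)) by (apply exp_le; nra). nra. }
        replace (y x) with (1 + v) by (unfold v; lra).
        replace (eps * (K * exp (K * x))) with ((2 * s + 1) * v) by (unfold v, K; ring).
        apply ode_up; auto. }
    specialize (B t1 ltac:(lra)). unfold d in B. rewrite EK in B. unfold w1 in *. lra.
Qed.


Lemma cR_minus (f g : R -> R) x : continuous f x -> continuous g x -> continuous (fun x => f x - g x) x.
Proof. intros A B. apply (continuous_plus f (fun x => - g x)); auto.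
  apply (continuous_opp g). auto. Qed.

Lemma Tsucc s g u nu0 nu1 f n t a :
  Defs.Tn s g u nu0 nu1 f (S n) t a =
  exp (- rate_sum (succ s g u nu0 nu1 a) (fun _ => 1) * t) * f a +
  Psi (succ s g u nu0 nu1) (fun x b => Defs.Tn s g u nu0 nu1 f n x b) t a.
Proof. reflexivity. Qed.

Lemma T0 s g u nu0 nu1 f t a :
  Defs.Tn s g u nu0 nu1 f 0 t a = exp (- rate_sum (succ s g u nu0 nu1 a) (fun _ => 1) * t) * f a.
Proof. reflexivity. Qed.

Lemma Tcont s g u nu0 nu1 f n : Ucont (fun x b => Defs.Tn s g u nu0 nu1 f n x b).
Proof.
  induction n; intros b x.
  - apply (continuous_ext_loc _ (fun x => exp (- rate_sum (succ s g u nu0 nu1 b) (fun _ => 1) * x) * f b)).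
    { apply filter_forall. intro. reflexivity. }
    apply cR_mult; [apply cR_exp|apply cR_const].
  - apply (continuous_ext_loc _ (fun x => exp (- rate_sum (succ s g u nu0 nu1 b) (fun _ => 1) * x) * f b
        + Psi (succ s g u nu0 nu1) (fun x b => Defs.Tn s g u nu0 nu1 f n x b) x b)).
    { apply filter_forall. intro. reflexivity. }
    apply cR_plus; [apply cR_mult; [apply cR_exp|apply cR_const]|].
    apply Psi_cont. exact IHn.
Qed.

Fixpoint Ssum (D : nat -> R -> tree -> R) (n : nat) (t : R) (a : tree) : R :=
  match n with
  | O => D O t a
  | S m => Ssum D m t a + D (S m) t a
  end.

Lemma Ssum_cont D n : (forall m, Ucont (D m)) -> Ucont (Ssum D n).
Proof.
  intros C. induction n; intros b x; simpl.
  - apply C.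
  - apply (cR_plus (fun x => Ssum D n x b) (fun x => D (S n) x b)); [apply IHn|apply C].
Qed.

Lemma key_ineq s g u nu0 nu1 t a :
  0 <= s -> 0 <= g -> 0 <= u -> 0 <= nu0 -> 0 <= nu1 -> 0 < s + g + u * nu1 + u * nu0 -> 0 <= t ->
  let c := s + g + u * nu1 + u * nu0 in
  Psi (succ s g u nu0 nu1) (fun x b => 1 + 2 * nl b * exp (5 * c * x)) t a <= 2 * nl a * exp (5 * c * t).
Proof.
  intros Hs Hg Hu H0 H1 Hc Ht c.
  assert (Hc0 : 0 < c) by exact Hc.
  set (k := nl a). set (lam := c * k). set (be := 5 * c). set (E := exp (be * t)).
  assert (Hk : 1 <= k) by apply nl_ge1.
  assert (Hlam : 0 < lam) by (unfold lam; nra).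
  assert (HE : 1 <= E) by (unfold E; rewrite <- exp_0; apply exp_le; unfold be; nra).
  set (w := fun r => lam * exp (- lam * r) + 2 * (k + 2) * lam * E * exp (- (lam + be) * r)).
  set (W := fun r => - exp (- lam * r) - 2 * (k + 2) * lam * E / (lam + be) * exp (- (lam + be) * r)).
  assert (IW : is_RInt w 0 t (W t - W 0)).
  { apply (@is_RInt_derive R_CompleteNormedModule W w 0 t).
    - intros x _. unfold W, w. auto_derive; auto. field. unfold be; lra.
    - intros x _. unfold w. apply cR_plus; apply cR_mult; try apply cR_const; apply cR_exp. }
  apply Rle_trans with (RInt w 0 t).
  - apply Psi_le_gen; auto.
    + intros b x. apply cR_plus; [apply cR_const|]. apply cR_mult; [apply cR_const|apply cR_exp].
    + eexists; exact IW.
    + intros r Hr. unfold w.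
      rewrite total_rate_nl. change ((s + g + u * nu1 + u * nu0) * nl a) with lam.
      apply Rle_trans with (exp (- lam * r) * rate_sum (succ s g u nu0 nu1 a)
                             (fun b => (1 + 2 * (k + 2) * exp (be * (t - r))) * (fun _ => 1) b)).
      * apply Rmult_le_compat_l; [apply Rlt_le, exp_pos|].
        apply rs_le. eapply List.Forall_impl; [|apply succ_prop; auto].
        simpl. intros p [Hp Hn]. split; auto. fold k in Hn. fold be.
        pose proof (exp_pos (be * (t - r))). nra.
      * rewrite rs_scal. rewrite total_rate_nl. change ((s + g + u * nu1 + u * nu0) * nl a) with lam.
        replace (exp (- (lam + be) * r)) with (exp (- lam * r) * exp (be * (t - r)) / E).
        2: { unfold E. replace (be * (t - r)) with (be * t + (- be * r)) by ring. rewrite exp_plus.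
             replace (- (lam + be) * r) with (- lam * r + - be * r) by ring. rewrite exp_plus.
             field. apply Rgt_not_eq, exp_pos. }
        right. field. lra.
  - rewrite (@is_RInt_unique R_CompleteNormedModule _ _ _ _ IW). unfold W.
    rewrite !Rmult_0_r, exp_0.
    assert (A1 : 0 < exp (- lam * t)) by apply exp_pos.
    assert (A2 : 0 < exp (- (lam + be) * t)) by apply exp_pos.
    set (q := 2 * (k + 2) * lam / (lam + be)).
    assert (Hq : q <= 2 * k - 1).
    { unfold q. apply Rmult_le_reg_r with (lam + be). unfold be; lra.
      unfold Rdiv. rewrite Rmult_assoc, Rinv_l by (unfold be; lra). rewrite Rmult_1_r.
      unfold lam, be. nra. }
    assert (Hq0 : 0 <= q) by (unfold q; apply Rmult_le_pos; [nra|apply Rlt_le, Rinv_0_lt_compat; unfold be; lra]).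
    replace (2 * (k + 2) * lam * E / (lam + be)) with (q * E) by (unfold q; field; unfold be; lra).
    assert (0 <= q * E * exp (- (lam + be) * t)) by (apply Rmult_le_pos; nra).
    assert (q * E <= (2 * k - 1) * E) by (apply Rmult_le_compat_r; lra).
    fold k. lra.
Qed.

Lemma conv_generic s g u nu0 nu1 (G : R -> tree -> R) :
  0 <= s -> 0 <= g -> 0 <= u -> 0 <= nu0 -> 0 <= nu1 -> 0 < s + g + u * nu1 + u * nu0 ->
  Ucont G -> (forall x b, 0 <= G x b <= 1) ->
  (forall t a, 0 <= t -> G t a = exp (- rate_sum (succ s g u nu0 nu1 a) (fun _ => 1) * t) * G 0 a
                                + Psi (succ s g u nu0 nu1) G t a) ->
  forall t a, 0 <= t ->
  is_lim_seq (fun n => Defs.Tn s g u nu0 nu1 (fun b => G 0 b) n t a) (G t a).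
Proof.
  intros Hs Hg Hu H0 H1 Hc CG G01 IE.
  set (sc := succ s g u nu0 nu1).
  set (T := fun n x b => Defs.Tn s g u nu0 nu1 (fun b => G 0 b) n x b).
  assert (CT : forall n, Ucont (T n)) by (intro; apply Tcont).
  assert (Pos : forall a, List.Forall (fun p => 0 <= fst p) (sc a)) by (intro; apply succ_nonneg; auto).
  set (D := fun n x b => G x b - T n x b).
  assert (CD : forall n, Ucont (D n)).
  { intros n b x. apply (cR_minus (fun x => G x b) (fun x => T n x b)); [apply CG|apply CT]. }
  assert (TS : forall n t a, T (S n) t a = exp (- rate_sum (sc a) (fun _ => 1) * t) * G 0 a + Psi sc (T n) t a).
  { intros. reflexivity. }
  assert (D0 : forall t a, 0 <= t -> D O t a = Psi sc G t a).
  { intros t a Ht. unfold D. rewrite (IE t a Ht). unfold T. rewrite T0. fold sc. ring. }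
  assert (DS : forall n t a, 0 <= t -> D (S n) t a = Psi sc (D n) t a).
  { intros n t a Ht. unfold D at 1. rewrite TS, (IE t a Ht). fold sc.
    unfold D. rewrite Psi_minus; auto. ring. }
  assert (Enn : forall n t a, 0 <= t -> 0 <= T (S n) t a - T n t a).
  { induction n; intros t a Ht.
    - rewrite TS. unfold T at 2. rewrite T0. fold sc.
      match goal with |- 0 <= ?A + ?B - ?C => replace (A + B - C) with B by ring end.
      apply Psi_nonneg; auto. intros x Hx b. unfold T. rewrite T0.
      apply Rmult_le_pos; [apply Rlt_le, exp_pos|apply G01].
    - rewrite (TS (S n)), (TS n).
      match goal with |- 0 <= ?A + ?B - (?A + ?C) => replace (A + B - (A + C)) with (B - C) by ring end.
      rewrite <- Psi_minus; auto. apply Psi_nonneg; auto.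
      + intros b x1 . apply (cR_minus (fun x => T (S n) x b) (fun x => T n x b)); apply CT.
      + intros x Hx b. apply IHn. lra. }
  assert (Dnn : forall n t a, 0 <= t -> 0 <= D n t a).
  { induction n; intros t a Ht.
    - rewrite D0 by auto. apply Psi_nonneg; auto. intros. apply G01.
    - rewrite DS by auto. apply Psi_nonneg; auto. intros x Hx b. apply IHn. lra. }
  assert (Dmono : forall n t a, 0 <= t -> D (S n) t a <= D n t a).
  { intros n t a Ht. specialize (Enn n t a Ht). unfold D. lra. }
  set (c := s + g + u * nu1 + u * nu0).
  set (M := fun x b => 2 * nl b * exp (5 * c * x)).
  assert (CM : Ucont M).
  { intros b x. unfold M. apply cR_mult; [apply cR_const|apply cR_exp]. }
  assert (M0 : forall x b, 0 <= M x b).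
  { intros. unfold M. pose proof (nl_ge1 b). pose proof (exp_pos (5 * c * x)). nra. }
  assert (KI : forall t a, 0 <= t -> Psi sc (fun x b => 1 + M x b) t a <= M t a).
  { intros t a Ht. apply key_ineq; auto. }
  assert (C1M : Ucont (fun x b => 1 + M x b)).
  { intros b x. apply (cR_plus (fun _ => 1) (fun x => M x b)); [apply cR_const|apply CM]. }
  assert (SE : forall n t a, 0 <= t -> Ssum D (S n) t a = Psi sc (fun x b => G x b + Ssum D n x b) t a).
  { induction n; intros t a Ht.
    - simpl. rewrite D0, DS by auto. rewrite Psi_plus; auto.
    - change (Ssum D (S (S n)) t a) with (Ssum D (S n) t a + D (S (S n)) t a).
      rewrite IHn, DS by auto. rewrite <- Psi_plus; auto.
      + apply Psi_ext; auto. intros x Hx b. simpl. ring.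
      + intros b x. apply (cR_plus (fun x => G x b) (fun x => Ssum D n x b)); [apply CG|apply Ssum_cont; auto]. }
  assert (SM : forall n t a, 0 <= t -> Ssum D n t a <= M t a).
  { induction n; intros t a Ht.
    - simpl. rewrite D0 by auto. eapply Rle_trans; [|apply KI; auto].
      apply Psi_le; auto. intros x Hx b. pose proof (G01 x b). pose proof (M0 x b). lra.
    - rewrite SE by auto. eapply Rle_trans; [|apply KI; auto].
      apply Psi_le; auto.
      + intros b x. apply (cR_plus (fun x => G x b) (fun x => Ssum D n x b)); [apply CG|apply Ssum_cont; auto].
      + intros x Hx b. pose proof (G01 x b). specialize (IHn x b ltac:(lra)). lra. }
  assert (DB : forall n t a, 0 <= t -> INR (S n) * D n t a <= Ssum D n t a).
  { induction n; intros t a Ht.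
    - simpl. lra.
    - rewrite S_INR. simpl Ssum. specialize (IHn t a Ht). specialize (Dmono n t a Ht).
      specialize (Dnn n t a Ht). rewrite S_INR in IHn. rewrite S_INR. pose proof (pos_INR n). assert (0 <= (INR n + 1) * (D n t a - D (S n) t a)) by (apply Rmult_le_pos; lra). nra. }
  intros t a Ht.
  apply is_lim_seq_le_le with (u := fun n => G t a - M t a * / INR (S n)) (w := fun _ => G t a).
  - intro n. specialize (DB n t a Ht). specialize (SM n t a Ht). specialize (Dnn n t a Ht).
    assert (0 < INR (S n)) by (apply lt_0_INR; lia).
    unfold D in *. unfold T in *. split.
    + assert (G t a - Defs.Tn s g u nu0 nu1 (fun b => G 0 b) n t a <= M t a * / INR (S n)).
      { apply Rmult_le_reg_l with (INR (S n)); auto. field_simplify; [|lra]. lra. }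
      lra.
    + lra.
  - assert (L : is_lim_seq (fun n => / INR (S n)) 0).
    { replace (Finite 0) with (Rbar_inv p_infty) by reflexivity.
      apply is_lim_seq_inv; [|discriminate].
      apply (is_lim_seq_incr_1 INR). apply is_lim_seq_INR. }
    pose proof (is_lim_seq_scal_l _ (M t a) _ L) as L2. simpl in L2.
    pose proof (is_lim_seq_minus' _ _ (G t a) _ (is_lim_seq_const (G t a)) L2) as L3.
    replace (G t a - M t a * 0) with (G t a) in L3 by ring. exact L3.
  - apply is_lim_seq_const.
Qed.


Lemma ftc_open (phi psi : R -> R) t : 0 < t ->
  (forall x, continuous phi x) -> (forall x, continuous psi x) ->
  (forall x, 0 < x -> is_derive phi x (psi x)) ->
  RInt psi 0 t = phi t - phi 0.
Proof.
  intros Ht Cphi Cpsi Dphi.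
  assert (Ex : forall a b, ex_RInt psi a b) by (intros; apply exR_cont; intros; apply Cpsi).
  set (F := fun e => RInt psi 0 e - phi e + phi t - RInt psi 0 t).
  assert (Fz : forall e, 0 < e < t -> F e = 0).
  { intros e He. unfold F.
    assert (I : is_RInt psi e t (minus (phi t) (phi e))).
    { apply (@is_RInt_derive R_CompleteNormedModule).
      - intros x Hx. rewrite Rmin_left in Hx by lra. apply Dphi. lra.
      - intros x _. apply Cpsi. }
    apply (@is_RInt_unique R_CompleteNormedModule) in I.
    rewrite <- (@RInt_Chasles R_CompleteNormedModule psi 0 e t) by auto.
    change (minus (phi t) (phi e)) with (phi t - phi e) in I.
    change (plus (RInt psi 0 e) (RInt psi e t)) with (RInt psi 0 e + RInt psi e t).
    rewrite I. ring. }
  assert (CF : continuity_pt F 0).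
  { apply continuity_pt_filterlim. unfold F.
    apply (cR_minus (fun e => RInt psi 0 e - phi e + phi t) (fun _ => RInt psi 0 t)); [|apply cR_const].
    apply (cR_plus (fun e => RInt psi 0 e - phi e) (fun _ => phi t)); [|apply cR_const].
    apply (cR_minus (fun e => RInt psi 0 e) phi); [|apply Cphi].
    apply (@continuous_RInt_1 R_NormedModule psi 0 0 (fun z => RInt psi 0 z)).
    apply filter_forall. intro z. apply (@RInt_correct R_CompleteNormedModule). auto. }
  assert (F0 : F 0 = 0).
  { destruct (Req_dec (F 0) 0) as [|Hn]; auto. exfalso.
    destruct (cont_ed F 0 CF (Rabs (F 0))) as [del [Hdel Hd]]. { apply Rabs_pos_lt; auto. }
    set (e := Rmin (del / 2) (t / 2)).
    assert (0 < e) by (unfold e; apply Rmin_pos; lra).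
    assert (e <= del / 2) by (unfold e; apply Rmin_l).
    assert (e <= t / 2) by (unfold e; apply Rmin_r).
    specialize (Hd e ltac:(rewrite Rminus_0_r, Rabs_right; lra)).
    rewrite Fz in Hd by lra. rewrite Rminus_0_l, Rabs_Ropp in Hd. lra. }
  unfold F in F0. rewrite RInt_point in F0. change (zero : R) with 0 in F0. lra.
Qed.

Definition yh (y : R -> R) (y0 : R) (x : R) : R := if Rle_dec x 0 then y0 else y x.

Lemma yh_eq (y : R -> R) y0 x : y 0 = y0 -> 0 <= x -> yh y y0 x = y x.
Proof. intros Y0 Hx. unfold yh. destruct (Rle_dec x 0); [|reflexivity]. replace x with 0 by lra. auto. Qed.

Lemma yh_pos (y : R -> R) y0 x : 0 < x -> locally x (fun z => y z = yh y y0 z).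
Proof.
  intro Hx. exists (mkposreal x Hx). intros z Hz. change (Rabs (z - x) < x) in Hz.
  apply Rabs_def2 in Hz. unfold yh. destruct (Rle_dec z 0); [lra|reflexivity].
Qed.

Lemma yh_cont s g u nu0 nu1 y0 (y : R -> R) :
  y 0 = y0 -> filterlim y (at_right 0) (locally y0) ->
  (forall t, 0 < t -> is_derive y t (ode_rhs s g u nu0 nu1 (y t))) ->
  forall x, continuous (yh y y0) x.
Proof.
  intros Y0 F D x.
  destruct (Rlt_or_le 0 x) as [Hx|Hx].
  - apply (continuous_ext_loc _ y). { apply yh_pos; auto. }
    apply cR_der. eexists. apply D; auto.
  - destruct (Rlt_or_le x 0) as [Hx'|Hx'].
    + apply (continuous_ext_loc _ (fun _ => y0)); [|apply cR_const].
      exists (mkposreal (- x) ltac:(lra)). intros z Hz. change (Rabs (z - x) < - x) in Hz.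
      apply Rabs_def2 in Hz. unfold yh. destruct (Rle_dec z 0); [reflexivity|lra].
    + replace x with 0 by lra. apply continuity_pt_filterlim.
      intros eps He. destruct (rc_of_filterlim y y0 F eps He) as [del [Hdel Hd]].
      exists del. split; auto. intros z [_ Hz]. change (Rabs (z - 0) < del) in Hz.
      rewrite Rminus_0_r in Hz. unfold R_dist.
      unfold yh at 2. destruct (Rle_dec 0 0); [|lra].
      unfold yh. destruct (Rle_dec z 0).
      * change (Rabs (y0 - y0) < eps). rewrite Rminus_diag, Rabs_R0. auto.
      * change (Rabs (y z - y0) < eps). apply Hd. apply Rabs_def2 in Hz. lra.
Qed.

Lemma H_cont (z : R -> R) a x : (forall x, continuous z x) -> continuous (fun x => H a (z x)) x.
Proof.
  intro C. induction a; simpl.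
  - apply C.
  - destruct b; apply cR_const.
  - apply (cR_mult (fun x => H a1 (z x)) (fun x => H a2 (z x))); auto.
  - apply (cR_mult (fun x => H a1 (z x)) (fun x => 1 - (1 - H a2 (z x)) * (1 - H a3 (z x)))); auto.
    apply (cR_minus (fun _ => 1)); [apply cR_const|].
    apply (cR_mult (fun x => 1 - H a2 (z x)) (fun x => 1 - H a3 (z x)));
      apply (cR_minus (fun _ => 1)); auto; apply cR_const.
Qed.


Theorem theorem2p11 :
  forall (s g u nu0 nu1 : R),
    0 < s -> 0 <= g -> 0 < u -> 0 <= nu0 -> 0 <= nu1 -> nu0 + nu1 = 1 ->
  forall (y0 : R), 0 <= y0 <= 1 ->
  forall (y : R -> R),
    y 0 = y0 ->
    filterlim y (at_right 0) (locally y0) ->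
    (forall t, 0 < t -> is_derive y t (ode_rhs s g u nu0 nu1 (y t))) ->
  (forall (alpha : tree) (t : R), 0 <= t ->
     H alpha (y t) = ASG_expect s g u nu0 nu1 alpha t (fun b => H b y0))
  /\
  (forall t : R, 0 <= t ->
     y t = ASG_expect s g u nu0 nu1 Leaf t (fun b => H b y0)).
Proof.
  intros s g u nu0 nu1 Hs Hg Hu H0 H1 Hsum y0 Hy0 y Y0 F D.
  pose proof (y_bounds s g u nu0 nu1 y0 y Hs Hg Hu H0 H1 Hy0 Y0 F D) as YB.
  set (G := fun x b => H b (yh y y0 x)).
  assert (CY : forall x, continuous (yh y y0) x) by (apply (yh_cont s g u nu0 nu1); auto).
  assert (CG : Ucont G) by (intros b x; apply H_cont; auto).
  assert (Y01 : forall x, 0 <= yh y y0 x <= 1).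
  { intro x. unfold yh. destruct (Rle_dec x 0); auto. apply YB. lra. }
  assert (G01 : forall x b, 0 <= G x b <= 1) by (intros; apply H_01; auto).
  assert (DY : forall x, 0 < x -> is_derive (yh y y0) x (ode_rhs s g u nu0 nu1 (yh y y0 x))).
  { intros x Hx. rewrite yh_eq by (auto; lra). eapply is_derive_ext_loc; [apply yh_pos; auto|]. apply D; auto. }
  assert (IE : forall t a, 0 <= t -> G t a = exp (- rate_sum (succ s g u nu0 nu1 a) (fun _ => 1) * t) * G 0 a
                                + Psi (succ s g u nu0 nu1) G t a).
  { intros t a Ht. destruct (Req_dec t 0) as [->|Htn].
    - rewrite Psi_0, Rmult_0_r, exp_0. ring.
    - rewrite Psi_alt by auto.
      set (lam := rate_sum (succ s g u nu0 nu1 a) (fun _ => 1)).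
      rewrite (ftc_open (fun x => exp (lam * x) * G x a)); [| lra | | |].
      + assert (EK : exp (- lam * t) * exp (lam * t) = 1).
        { rewrite <- exp_plus. replace (- lam * t + lam * t) with 0 by ring. apply exp_0. }
        rewrite Rmult_0_r, exp_0.
        transitivity (exp (- lam * t) * exp (lam * t) * G t a); [rewrite EK; ring|ring].
      + intro x. apply (cR_mult (fun x => exp (lam * x)) (fun x => G x a)); [apply cR_exp|apply CG].
      + intro x. apply g_cont; auto.
      + intros x Hx. unfold G.
        eapply is_derive_eq.
        * apply dR_mult; [|apply (H_deriv s g u nu0 nu1); apply DY; auto].
          apply (is_derive_eq _ _ (lam * exp (lam * x))). { auto_derive; auto. ring. } reflexivity.
        * unfold Lgen. fold lam. ring. }
  pose proof (conv_generic s g u nu0 nu1 G ltac:(lra) Hg ltac:(lra) H0 H1 ltac:(nra) CG G01 IE) as CV.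
  assert (Ef : (fun b => G 0 b) = (fun b => H b y0)).
  { apply functional_extensionality. intro b. unfold G, yh. destruct (Rle_dec 0 0); [reflexivity|lra]. }
  assert (Main : forall alpha t, 0 <= t -> H alpha (y t) = ASG_expect s g u nu0 nu1 alpha t (fun b => H b y0)).
  { intros alpha t Ht. unfold ASG_expect. specialize (CV t alpha Ht). rewrite Ef in CV.
    rewrite (is_lim_seq_unique _ _ CV). simpl. unfold G. rewrite yh_eq; auto. }
  split; auto.
  intros t Ht. rewrite <- Main; auto.
Qed.
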